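(* Let $G=(V,E)$ be a finite graph satisfying the $CDE(n,-K)$ condition for some constants $n>0$, $K>0$, and let $u:V\times[0,+\infty)\to(0,+\infty)$ be a positive solution of the heat equation $\partial_t u=\Delta u$ on $V$. Then $$\frac{\Gamma(\sqrt{u})}{u}-\frac{\partial_{t}(\sqrt{u})}{\sqrt{u}}\leq \frac{n}{2t}+\sqrt{\tfrac{1}{2}nKD_{\mu}(D_{w}+1)}\qquad\text{for all } t>0 \text{ and all vertices}.$$
   Context: Graphs: $G=(V,E)$ is a connected, locally finite graph; each edge $xy$ carries a weight $w_{xy}>0$ (possibly $w_{xy}\neq w_{yx}$), and $\mu:V\to(0,\infty)$ is a vertex measure. Write $y\sim x$ if $xy\in E$, $\deg(x)=\sum_{y\sim x}w_{xy}<\infty$, $D_\mu=\sup_{x\in V}\deg(x)/\mu(x)$, $D_w=\sup_{x\sim y}\deg(x)/w_{xy}$. The Laplacian is $\Delta f(x)=\frac{1}{\mu(x)}\sum_{y\sim x}w_{xy}(f(y)-f(x))$. The gradient forms are $2\Gamma(f,g)=\Delta(fg)-f\Delta g-g\Delta f$, $2\Gamma_2(f,g)=\Delta\Gamma(f,g)-\Gamma(f,\Delta g)-\Gamma(\Delta f,g)$, $\Gamma(f)=\Gamma(f,f)$, $\Gamma_2(f)=\Gamma_2(f,f)$. The graph satisfies $CDE(n,K)$ ($n>0$, $K\in\mathbb R$) if for every $f:V\to(0,\infty)$ and every vertex, $\widetilde\Gamma_2(f)\ge\frac1n(\Delta f)^2+K\Gamma(f)$, where $\widetilde\Gamma_2(f)=\Gamma_2(f)-\Gamma\big(f,\frac{\Gamma(f)}{f}\big)$.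 A positive solution of the heat equation on a set $U\subset V$ is a function $u:V\times[0,\infty)\to(0,\infty)$, continuously differentiable in $t$, with $\partial_t u(x,t)=\Delta u(\cdot,t)(x)$ for all $x\in U$, $t\ge 0$; here $\sqrt u$, $\Gamma(\sqrt u)$ etc. are taken at each fixed time. *)

(* Defs.v *)
From HB Require Import structures.
From mathcomp Require Import all_boot all_order all_algebra.
From mathcomp Require Import all_classical all_reals all_analysis.
Set Implicit Arguments. Unset Strict Implicit. Unset Printing Implicit Defensive.
Import Order.TTheory GRing.Theory Num.Theory.
Import numFieldNormedType.Exports.
Local Open Scope ring_scope.

Section GraphDefs.
Variables (R : realType) (V : finType) (adj : rel V) (w : V -> V -> R) (mu : V -> R).

Definition lap (f : V -> R) (x : V) : R :=
  (mu x)^-1 * \sum_(y | adj x y) w x y * (f y - f x).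

Definition Gam (f g : V -> R) (x : V) : R :=
  (lap (fun z => f z * g z) x - f x * lap g x - g x * lap f x) / 2.

Definition Gam2 (f g : V -> R) (x : V) : R :=
  (lap (Gam f g) x - Gam f (lap g) x - Gam (lap f) g x) / 2.

Definition Gam2t (f : V -> R) (x : V) : R :=
  Gam2 f f x - Gam f (fun z => Gam f f z / f z) x.

Definition CDE (n K : R) : Prop :=
  forall f : V -> R, (forall z, 0 < f z) ->
    forall x, (lap f x) ^+ 2 / n + K * Gam f f x <= Gam2t f x.

Definition deg (x : V) : R := \sum_(y | adj x y) w x y.

(* D_mu = sup_x deg(x)/mu(x)  (all terms are >= 0, so max with 0 is harmless) *)
Definition Dmu : R := \big[Num.max/0]_(x : V) (deg x / mu x).

Definition Dw : R := \big[Num.max/0]_(x : V) \big[Num.max/0]_(y | adj x y) (deg x / w x y).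

End GraphDefs.

(* Main.v *)
Require Import Defs.
From HB Require Import structures.
From mathcomp Require Import all_boot all_order all_algebra.
From mathcomp Require Import all_classical all_reals all_analysis.
From mathcomp Require Import ring lra.
Import Order.TTheory GRing.Theory Num.Theory.
Import numFieldNormedType.Exports.
Local Open Scope classical_set_scope.
Local Open Scope ring_scope.

Section Alg.
Variables (R : realType) (V : finType) (adj : rel V) (w : V -> V -> R) (mu : V -> R).
Local Notation Lp := (lap adj w mu).
Local Notation G := (Gam adj w mu).

Lemma lap_ext f g x : (forall z, f z = g z) -> Lp f x = Lp g x.
Proof. by move=> fg; rewrite /lap; congr (_ * _); apply: eq_bigr => y _; rewrite !fg. Qed.

Lemma lapD f g x : Lp (fun z => f z + g z) x = Lp f x + Lp g x.
Proof.
rewrite /lap -mulrDr -big_split /=; congr (_ * _); apply: eq_bigr => y _; ring.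
Qed.

Lemma lapZ c f x : Lp (fun z => c * f z) x = c * Lp f x.
Proof.
rewrite /lap [RHS]mulrCA (mulr_sumr _ _ _ c); congr (_ * _); apply: eq_bigr => y _; ring.
Qed.

Lemma lapN f x : Lp (fun z => - f z) x = - Lp f x.
Proof. by rewrite -mulN1r -lapZ; apply: lap_ext => z; ring. Qed.

Lemma lapB f g x : Lp (fun z => f z - g z) x = Lp f x - Lp g x.
Proof. by rewrite lapD lapN. Qed.

Lemma GamC f g x : G f g x = G g f x.
Proof.
rewrite /Gam (lap_ext _ (fun z => g z * f z)); last by move=> z; rewrite mulrC.
congr (_ / _); ring.
Qed.

Lemma key_identity f x : (forall z, f z != 0) ->
  let q := fun z => G f f z / f z in
  let d := fun z => Lp f z + q z in
  4 * Gam2t adj w mu f x =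
    Lp (fun z => -2 * (f z * Lp f z)) x - (-2 * (d x * Lp f x + f x * Lp d x)).
Proof.
move=> f0 q d.
have Gq : forall z, G f f z = f z * q z by move=> z; rewrite /q mulrC divfK.
rewrite /Gam2t /Gam2 (lap_ext _ (fun z => f z * q z)) //.
rewrite [G (Lp f) f x]GamC /d lapD lapZ.
set A := Lp (fun z => f z * q z) x.
set B := Lp (fun z => f z * Lp f z) x.
have E1 : G f (Lp f) x = (B - f x * Lp (Lp f) x - Lp f x * Lp f x)/2 by [].
have E2 : G f q x = (A - f x * Lp q x - q x * Lp f x)/2 by [].
rewrite E1 -/q E2.
by field.
Qed.


End Alg.
Section Alg2.
Variables (R : realType) (V : finType) (adj : rel V) (w : V -> V -> R) (mu : V -> R).
Local Notation Lp := (lap adj w mu).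
Local Notation G := (Gam adj w mu).

Lemma Gam_expl f x : G f f x =
  (mu x)^-1 * (\sum_(y | adj x y) w x y * (f y - f x) ^+ 2) / 2.
Proof.
have -> : \sum_(y | adj x y) w x y * (f y - f x) ^+ 2 =
  \sum_(y | adj x y) (w x y * (f y * f y - f x * f x) - f x * (w x y * (f y - f x))
     - f x * (w x y * (f y - f x))).
  by apply: eq_bigr => y _; ring.
rewrite !sumrB -!mulr_sumr /Gam /lap; ring.
Qed.

Lemma Dmu_ge x : deg adj w x / mu x <= Dmu adj w mu.
Proof. rewrite /Dmu; apply: le_bigmax. Qed.

Lemma Dw_ge x y : adj x y -> deg adj w x / w x y <= Dw adj w.
Proof.
move=> axy; rewrite /Dw; apply: (bigmax_sup x) => //; apply: (bigmax_sup y) => //.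
Qed.

Lemma Dw_ge0 : 0 <= Dw adj w.
Proof. rewrite /Dw; exact: bigmax_ge_id. Qed.

Lemma Gam_bound f x : (forall y, adj x y -> 0 < w x y) -> 0 < mu x ->
  (forall z, 0 < f z) -> Lp f x <= 0 ->
  G f f x / (f x ^+ 2) <= Dmu adj w mu * (Dw adj w + 1) / 2.
Proof.
move=> wp mup fp L0.
set D := Dw adj w.
set dg := deg adj w x.
have fx0 := fp x.
have S0 : \sum_(y | adj x y) w x y * f y <= dg * f x.
  move: L0; rewrite /lap pmulr_rle0 ?invr_gt0 //.
  have -> : \sum_(y | adj x y) w x y * (f y - f x) =
      \sum_(y | adj x y) w x y * f y - dg * f x.
    rewrite /dg /deg mulr_suml -sumrB; apply: eq_bigr => y _; ring.
  by rewrite subr_le0.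
have fyb : forall y, adj x y -> f y ^+ 2 <= D * f x * f y.
  move=> y axy.
  have h1 : w x y * f y <= dg * f x.
    apply: le_trans _ S0; rewrite (bigD1 y) //= lerDl.
    by apply: sumr_ge0 => z /andP[az _]; rewrite mulr_ge0 // ltW // ?wp ?fp.
  have h2 : dg / w x y <= D by exact: Dw_ge.
  have wy := wp y axy.
  have h3 : f y <= dg / w x y * f x.
    by rewrite mulrAC ler_pdivlMr // mulrC.
  have h4 : f y <= D * f x.
    apply: le_trans h3 _; rewrite ler_pM2r //.
  by rewrite expr2 ler_pM2r ?fp.
have dg0 : 0 <= dg by apply: sumr_ge0 => z az; rewrite ltW ?wp.
have Sq : \sum_(y | adj x y) w x y * (f y - f x) ^+ 2 <= (D + 1) * dg * f x ^+ 2.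
  apply: le_trans (_ : \sum_(y | adj x y) (D * f x * (w x y * f y) + f x ^+ 2 * w x y) <= _).
    apply: ler_sum => y axy.
    have e1 : (f y - f x) ^+ 2 <= D * f x * f y + f x ^+ 2.
      have := fyb y axy; have := fp y; move=> a b; nra.
    have := ler_wpM2l (ltW (wp y axy)) e1.
    move=> e2; apply: le_trans e2 _; rewrite le_eqVlt; apply/orP; left; apply/eqP; ring.
  rewrite big_split /= -!mulr_sumr -/dg.
  have hh : D * f x * \sum_(i | adj x i) w x i * f i <= D * f x * (dg * f x).
    by rewrite ler_wpM2l // mulr_ge0 // ?Dw_ge0 // ltW.
  rewrite /dg /deg in hh *.
  set S := \sum_(i | adj x i) w x i.
  have -> : (D + 1) * S * f x ^+ 2 = D * f x * (S * f x) + f x ^+ 2 * S by ring.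
  by rewrite lerD2r.
rewrite Gam_expl.
have Dm := Dmu_ge x. rewrite -/dg in Dm.
have fx2 : 0 < f x ^+ 2 by rewrite exprn_gt0.
have mu0 : mu x != 0 by rewrite gt_eqF.
have fx0' : f x ^+ 2 != 0 by rewrite gt_eqF.
have D0 : 0 <= D + 1 by have := Dw_ge0; rewrite -/D; lra.
apply: le_trans (_ : (mu x)^-1 * ((D+1)*dg*f x^+2)/2/f x^+2 <= _).
  apply: ler_wpM2r; first by rewrite invr_ge0 ltW.
  apply: ler_wpM2r => //.
  apply: ler_wpM2l; first by rewrite invr_ge0 ltW.
  exact: Sq.
have -> : (mu x)^-1 * ((D+1)*dg*f x^+2)/2/f x^+2 = (D+1) * (dg / mu x) / 2.
  by field; rewrite mu0 gt_eqF.
rewrite [X in _ <= X / 2]mulrC; apply: ler_wpM2r => //; exact: ler_wpM2l.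
Qed.

End Alg2.
Section Calc.
Variable R : realType.
Implicit Types (f g : R -> R) (t : R).

Lemma dM {f g t df dg} : is_derive t 1 f df -> is_derive t 1 g dg ->
  is_derive t 1 (fun s => f s * g s) (f t * dg + g t * df).
Proof. by move=> a b; have := is_deriveM a b. Qed.

Lemma dD {f g t df dg} : is_derive t 1 f df -> is_derive t 1 g dg ->
  is_derive t 1 (fun s => f s + g s) (df + dg).
Proof. by move=> a b; have := is_deriveD a b. Qed.

Lemma dB {f g t df dg} : is_derive t 1 f df -> is_derive t 1 g dg ->
  is_derive t 1 (fun s => f s - g s) (df - dg).
Proof. by move=> a b; have := is_deriveB a b. Qed.

Lemma dC (c : R) t : is_derive t 1 (fun _ : R => c) 0.
Proof. exact: is_derive_cst. Qed.

Lemma dId t : is_derive t 1 (fun s : R => s) 1.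
Proof. exact: is_derive_id. Qed.

Lemma dZ (c : R) {f t df} : is_derive t 1 f df -> is_derive t 1 (fun s => c * f s) (c * df).
Proof.
move=> a; have := dM (dC c t) a; by rewrite mulr0 addr0.
Qed.

Lemma dsum (I : finType) (P : pred I) (F : I -> R -> R) (dF : I -> R) t :
  (forall i, P i -> is_derive t 1 (F i) (dF i)) ->
  is_derive t 1 (fun s => \sum_(i | P i) F i s) (\sum_(i | P i) dF i).
Proof.
move=> h; rewrite -fct_sumE.
apply: (big_rec2 (fun d F => is_derive t 1 F d)).
  exact: is_derive_cst.
by move=> i d G Pi hG; apply: is_deriveD => //; exact: h.
Qed.

Lemma dsqrt {f t df} : 0 < f t -> is_derive t 1 f df ->
  is_derive t 1 (fun s => Num.sqrt (f s)) (df / (2 * Num.sqrt (f t))).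
Proof.
move=> ft d; have s := is_derive1_sqrt ft.
have := is_derive1_comp s d; rewrite mulrC; exact.
Qed.

End Calc.
Arguments dM {R f g t df dg}.
Arguments dD {R f g t df dg}.
Arguments dB {R f g t df dg}.
Arguments dZ {R} c {f t df}.
Arguments dsqrt {R f t df}.
Arguments dsum {R I P F dF t}.
Arguments dC {R}.
Arguments dId {R}.
Lemma left_max (R : realType) (f : R -> R) (a c df : R) : a < c -> is_derive c 1 f df ->
  (forall t, a < t -> t <= c -> f t <= f c) -> 0 <= df.
Proof.
move=> ac d cmax.
have fd : derivable f c 1 by case: d.
have -> : df = 'D_1 f c by rewrite derive_val.
rewrite ['D_1 f c]cvg_at_leftE; last exact: fd.
apply: limr_ge.
  rewrite -(cvg_at_leftE (fun h => h^-1 *: ((f \o shift c) _ - f c))) //.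
  apply: cvg_trans fd; apply: cvg_app.
  move=> A [e egt0 Ae]; exists e => // x xe xgt0; apply: Ae => //.
  exact/ltr0_neq0.
near=> h; apply: mulr_le0.
  by rewrite invr_le0; apply: ltW; near: h; exists 1 => /=.
rewrite subr_le0 [_%:A]mulr1.
have hneg : h < 0 by near: h; exists 1 => /=.
apply: cmax; last by rewrite /=; lra.
near: h.
exists (c - a); first by rewrite /= subr_gt0.
move=> h; rewrite /= distrC subr0.
move=> /ltr_normlP [] + _ _; rewrite /=; lra.
Unshelve. all: by end_near. Qed.

Lemma alg_quad (R : realType) (n k tau h : R) : 0 < n -> 0 <= k -> 0 < tau ->
  2 * tau * h ^+ 2 / n - 2 * tau * k <= h -> h <= n / (2 * tau) + Num.sqrt (n * k).
Proof.
move=> n0 k0 t0 hyp.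
set S := Num.sqrt (n * k).
have S0 : 0 <= S by exact: sqrtr_ge0.
have S2 : S ^+ 2 = n * k by rewrite sqr_sqrtr // mulr_ge0 // ltW.
set a := n / (2 * tau).
have a0 : 0 < a by rewrite divr_gt0 // mulr_gt0.
have hyp' : h ^+ 2 - n * k <= a * h.
  have e : h ^+ 2 - n * k = a * (2 * tau * h ^+ 2 / n - 2 * tau * k).
    rewrite /a; field; rewrite gt_eqF //= gt_eqF //.
  by rewrite e; apply: ler_wpM2l => //; exact: ltW.
rewrite leNgt; apply/negP => hlt.
have h1 : 0 < h - a - S by lra.
have h2 : 0 < h by lra.
have : 0 < h * (h - a - S) + S * (h - S).
  have : 0 < h * (h - a - S) by exact: mulr_gt0.
  have : 0 <= S * (h - S) by rewrite mulr_ge0 //; lra.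
  lra.
have -> : h * (h - a - S) + S * (h - S) = h ^+ 2 - S ^+ 2 - a * h by ring.
rewrite S2; lra.
Qed.

Lemma alg_lim (R : realType) (h A S T : R) : 0 < A -> 0 < T ->
  (forall e, 0 < e -> e < T -> h <= A / (T - e) + S) -> h <= A / T + S.
Proof.
move=> A0 T0 H.
rewrite leNgt; apply/negP => hlt.
set d := h - S - A / T.
have d0 : 0 < d by rewrite /d; lra.
set e := T * (d * T) / (2 * A + d * T).
have den : 0 < 2 * A + d * T by have := mulr_gt0 d0 T0; lra.
have e0 : 0 < e by rewrite /e divr_gt0 // !mulr_gt0.
have eT : e < T.
  rewrite /e ltr_pdivrMr // mulrDr; have := mulr_gt0 T0 A0; lra.
have := H e e0 eT.
have -> : A / (T - e) = A / T + d / 2.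
  have Te : T - e = 2 * A * T / (2 * A + d * T).
    rewrite /e; field; rewrite gt_eqF //.
  rewrite Te; field; rewrite !gt_eqF //= ?mulr_gt0 //.
rewrite /d; lra.
Qed.

Lemma lap_le (R : realType) (V : finType) (adj : rel V) (w : V -> V -> R) (mu : V -> R)
  (g1 g2 : V -> R) x : (forall y, adj x y -> 0 < w x y) -> 0 < mu x ->
  (forall y, adj x y -> g1 y <= g2 y) -> g1 x = g2 x ->
  lap adj w mu g1 x <= lap adj w mu g2 x.
Proof.
move=> wp mup h e; rewrite /lap; apply: ler_wpM2l; first by rewrite invr_ge0 ltW.
apply: ler_sum => y axy; apply: ler_wpM2l; first exact/ltW/wp.
by rewrite e lerD2r h.
Qed.

Section Main.
Variables (R : realType) (V : finType) (adj : rel V) (w : V -> V -> R) (mu : V -> R)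
  (n K : R) (u : V -> R -> R).
Hypotheses (wp : forall x y, adj x y -> 0 < w x y) (mup : forall x, 0 < mu x)
  (n0 : 0 < n) (K0 : 0 < K) (cde : CDE adj w mu n (- K))
  (upos : forall x t, 0 <= t -> 0 < u x t)
  (uder : forall x t, 0 < t -> derivable (u x) t 1 /\
       derive1 (u x) t = lap adj w mu (fun y => u y t) x).

Local Notation Lp := (lap adj w mu).
Definition ff (t : R) (y : V) := Num.sqrt (u y t).
Definition Ut t y := Lp (fun z => u z t) y.
Definition dd t y := Ut t y / (2 * ff t y).
Definition HH t x := - Lp (ff t) x / ff t x.
Definition Phi t x := -2 * (ff t x * Lp (ff t) x).

Lemma ffpos (t : R) (y : V) : 0 <= t -> 0 < ff t y.
Proof. by move=> t0; rewrite sqrtr_gt0 upos. Qed.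

Lemma ffsq (t : R) (y : V) : 0 <= t -> ff t y * ff t y = u y t.
Proof. by move=> t0; rewrite -expr2 sqr_sqrtr // ltW // upos. Qed.

Lemma du (t : R) (y : V) : 0 < t -> is_derive t 1 (u y) (Ut t y).
Proof.
move=> t0; have [d e] := uder y t t0.
have := derivableP d; by rewrite -derive1E e.
Qed.

Lemma dff (t : R) (y : V) : 0 < t -> is_derive t 1 (fun s => ff s y) (dd t y).
Proof. move=> t0; have := (dsqrt (upos y t (ltW t0)) (du t y t0)). exact. Qed.

Lemma dd_eq (t : R) (y : V) : 0 < t ->
  dd t y = Lp (ff t) y + Gam adj w mu (ff t) (ff t) y / ff t y.
Proof.
move=> t0; have f0 : ff t y != 0 by rewrite gt_eqF // ffpos // ltW.
rewrite /dd /Ut (@lap_ext _ _ adj w mu _ (fun z => ff t z * ff t z)); last first.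
  by move=> z; rewrite ffsq // ltW.
rewrite /Gam; field; by rewrite f0.
Qed.

Lemma dLp (t : R) (x : V) : 0 < t -> is_derive t 1 (fun s => Lp (ff s) x) (Lp (dd t) x).
Proof.
move=> t0; rewrite /lap; apply: dZ.
apply: (dsum (F := fun y s => w x y * (ff s y - ff s x))) => y _.
by apply: dZ; apply: dB; apply: dff.
Qed.

Lemma dPhi (t : R) (x : V) : 0 < t -> is_derive t 1 (fun s => Phi s x)
  (-2 * (dd t x * Lp (ff t) x + ff t x * Lp (dd t) x)).
Proof.
move=> t0; rewrite /Phi; apply: is_derive_eq.
  by apply: dZ; apply: dM; [apply: dff | apply: dLp].
by congr (_ * _); rewrite addrC mulrC.
Qed.

Lemma Phi_Fe (s e : R) (y : V) : 0 <= s ->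
  (s - e) * Phi s y = u y s * (2 * (s - e) * HH s y).
Proof.
move=> s0; have f0 : ff s y != 0 by rewrite gt_eqF // ffpos.
rewrite /Phi /HH -ffsq //; field; by rewrite f0.
Qed.

Lemma dHH (s : R) (x : V) : 0 < s -> derivable (fun s => HH s x) s 1.
Proof.
move=> s0.
have -> : (fun s => HH s x) = (fun s => (-1 * Lp (ff s) x) * (ff s x)^-1).
  by apply/funext => r; rewrite /HH mulN1r.
have f0 : ff s x != 0 by rewrite gt_eqF // ffpos // ltW.
have [h _] := dM (dZ (-1) (dLp s x s0)) (@is_deriveV _ (fun r => ff r x) s _ 1 f0 (dff s x s0)).
exact: h.
Qed.

Lemma dFe (e s : R) (x : V) : 0 < s -> derivable (fun s => 2 * (s - e) * HH s x) s 1.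
Proof.
move=> s0; have d := dHH s x s0.
have [h _] := dM (dZ 2 (dB (dId s) (dC e s))) (DeriveDef d erefl).
exact: h.
Qed.

Definition cc := Dmu adj w mu * (Dw adj w + 1) / 2.

Lemma cc_ge0 : 0 <= cc.
Proof.
rewrite /cc; apply: divr_ge0 => //; apply: mulr_ge0.
  by rewrite /Dmu; exact: bigmax_ge_id.
by apply: addr_ge0 => //; exact: Dw_ge0.
Qed.

Lemma main_e (e T : R) (x : V) : 0 < e -> e < T ->
  HH T x <= n / (2 * (T - e)) + Num.sqrt (n * (K * cc)).
Proof.
move=> e0 eT.
pose Fe s y := 2 * (s - e) * HH s y.
have cont : forall y, {within `[e, T], continuous (fun s => Fe s y)}.
  move=> y; apply: derivable_within_continuous => s; rewrite in_itv /= => /andP[es _].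
  by apply: dFe; exact: lt_le_trans es.
have ex : forall y, exists c, c \in `[e, T] /\ forall s, s \in `[e, T] -> Fe s y <= Fe c y.
  by move=> y; have [c c1 c2] := EVT_max (ltW eT) (cont y); exists c.
have [cf Hcf] := choice ex.
case: (@arg_maxP _ _ V x predT (fun y => Fe (cf y) y) isT) => xs _ Hxs.
set ts := cf xs. set Fs := Fe ts xs.
have Hmax : forall y s, e <= s -> s <= T -> Fe s y <= Fs.
  move=> y s es sT; have [_ h] := Hcf y.
  apply: le_trans (h s _) _; first by rewrite in_itv /= es sT.
  exact: Hxs.
have [tse tsT] : e <= ts /\ ts <= T.
  by have [h _] := Hcf xs; move: h; rewrite in_itv /= => /andP[].
have Te : 0 < T - e by rewrite subr_gt0.
have S0 : 0 <= Num.sqrt (n * (K * cc)) by exact: sqrtr_ge0.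
have nT : 0 < n / (2 * (T - e)) by rewrite divr_gt0 // mulr_gt0.
have HT : 2 * (T - e) * HH T x <= Fs by exact: (Hmax x T (ltW eT) (lexx T)).
case: (lerP Fs 0) => [Fs0 | Fspos].
  have : HH T x <= 0.
    have h2 : 0 < 2 * (T - e) by rewrite mulr_gt0.
    by rewrite -(pmulr_rle0 _ h2); apply: le_trans HT Fs0.
  lra.
have tse' : e < ts.
  rewrite lt_neqAle tse andbT; apply/eqP => E.
  by move: Fspos; rewrite /Fs /Fe -/ts -E subrr mulr0 mul0r ltxx.
have ts0 : 0 < ts by exact: lt_trans tse'.
set tau := ts - e.
have tau0 : 0 < tau by rewrite subr_gt0.
set f := ff ts.
have fpos : forall z, 0 < f z by move=> z; exact: ffpos (ltW ts0).
have fne : forall z, f z != 0 by move=> z; rewrite gt_eqF.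
set L := Lp f xs.
have dg := dB (dM (dB (dId ts) (dC e ts)) (dPhi ts xs ts0)) (dZ Fs (du ts xs ts0)).
have A : 0 <= (ts - e) * (-2 * (dd ts xs * Lp (ff ts) xs + ff ts xs * Lp (dd ts) xs))
           + Phi ts xs * (1 - 0) - Fs * Ut ts xs.
  apply: (@left_max _ _ _ _ _ tse' dg) => r er rts.
  have r0 : 0 <= r by apply: ltW; exact: lt_trans er.
  rewrite /= !Phi_Fe //; last exact: ltW.
  have -> : u xs ts * (2 * (ts - e) * HH ts xs) = Fs * u xs ts by rewrite mulrC.
  rewrite subrr subr_le0 [Fs * _]mulrC; apply: ler_wpM2l; first exact/ltW/(upos xs r r0).
  by apply: Hmax => //; [exact: ltW | exact: le_trans tsT].
rewrite -/tau -/f -/L subr0 mulr1 in A.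
set P' := -2 * (dd ts xs * L + f xs * Lp (dd ts) xs) in A.
have B : tau * Lp (fun y => Phi ts y) xs <= Fs * Ut ts xs.
  rewrite -lapZ (@lap_ext _ _ adj w mu _ (fun y => u y ts * Fe ts y)); last first.
    by move=> z; rewrite Phi_Fe // ltW.
  rewrite /Ut -lapZ; apply: lap_le => //; first exact: wp.
    move=> y axy; rewrite mulrC; apply: ler_wpM2r; first exact/ltW/(upos y ts (ltW ts0)).
    exact: Hmax.
  by rewrite mulrC.
have KI : 4 * Gam2t adj w mu f xs = Lp (fun y => Phi ts y) xs - P'.
  rewrite (@key_identity _ _ adj w mu f xs fne) /=.
  rewrite /P' -/L; congr (_ - (-2 * (_ + _ * _))).
    by rewrite /L dd_eq.
  by apply: lap_ext => z; rewrite dd_eq.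
have C := cde f fpos xs.
rewrite -/L in C.
have Lneg : L <= 0.
  move: Fspos; rewrite /Fs /Fe /HH -/f -/L -/tau => h.
  rewrite leNgt; apply/negP => Lp0.
  have h2 : - L / f xs < 0 by rewrite ltr_pdivrMr // mul0r oppr_lt0.
  have : 2 * tau * (- L / f xs) < 0 by rewrite pmulr_rlt0 // mulr_gt0.
  lra.
have GB := @Gam_bound _ _ adj w mu f xs (wp xs) (mup xs) fpos Lneg.
set G := Gam adj w mu f f xs in C GB.
set Q := Gam2t adj w mu f xs in KI C.
set fx := f xs in GB.
have fx0 : 0 < fx := fpos xs.
have fx2 : 0 < fx ^+ 2 by rewrite exprn_gt0.
rewrite ler_pdivrMr // -/cc in GB.
have E1 : tau * (4 * Q) <= -2 * (fx * L).
  have -> : -2 * (fx * L) = Phi ts xs by [].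
  rewrite KI mulrBr; lra.
have t4 : 0 <= 4 * tau by rewrite mulr_ge0 // ltW.
have C4 := ler_wpM2l t4 C.
have KG : K * G <= K * (cc * fx ^+ 2) by rewrite ler_wpM2l // ltW.
have KG4 := ler_wpM2l t4 KG.
have key : 4 * tau * (L ^+ 2 / n) - 4 * tau * (K * (cc * fx ^+ 2)) <= -2 * (fx * L).
  have e1 : 4 * tau * (L ^+ 2 / n + - K * G) = 4 * tau * (L ^+ 2 / n) - 4 * tau * (K * G) by ring.
  have e2 : 4 * tau * Q = tau * (4 * Q) by ring.
  rewrite e1 e2 in C4; lra.
set h := HH ts xs.
have Lh : L = - h * fx.
  rewrite /h /HH -/f -/L -/fx; field; by rewrite gt_eqF.
rewrite Lh in key.
have hq : 2 * tau * h ^+ 2 / n - 2 * tau * (K * cc) <= h.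
  have : (2 * fx ^+ 2) * (2 * tau * h ^+ 2 / n - 2 * tau * (K * cc) - h) <= 0.
    have -> : (2 * fx ^+ 2) * (2 * tau * h ^+ 2 / n - 2 * tau * (K * cc) - h) =
      4 * tau * ((- h * fx) ^+ 2 / n) - 4 * tau * (K * (cc * fx ^+ 2)) - -2 * (fx * (- h * fx)).
      by field; rewrite gt_eqF.
    lra.
  rewrite pmulr_rle0 ?mulr_gt0 //; lra.
have Kc0 : 0 <= K * cc by rewrite mulr_ge0 ?cc_ge0 // ltW.
have hb := @alg_quad _ n (K * cc) tau h n0 Kc0 tau0 hq.
set S := Num.sqrt (n * (K * cc)) in hb S0 *.
have hFs : Fs = 2 * tau * h by [].
have Te2 : 0 < 2 * (T - e) by rewrite mulr_gt0.
rewrite -(ler_pM2l Te2).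
have -> : 2 * (T - e) * (n / (2 * (T - e)) + S) = n + 2 * (T - e) * S.
  by field; rewrite gt_eqF.
apply: le_trans HT _; rewrite hFs.
apply: le_trans (_ : 2 * tau * (n / (2 * tau) + S) <= _).
  by rewrite ler_wpM2l // mulr_ge0 // ltW.
have -> : 2 * tau * (n / (2 * tau) + S) = n + 2 * tau * S.
  by field; rewrite gt_eqF.
rewrite lerD2l; apply: ler_wpM2r => //; rewrite ler_pM2l //; rewrite /tau; lra.
Qed.
End Main.


Theorem mainTheorem1 (R : realType) (V : finType) (adj : rel V)
  (w : V -> V -> R) (mu : V -> R) (n K : R) (u : V -> R -> R) :
  (forall x y, adj x y = adj y x) ->
  irreflexive adj ->
  (forall x y, connect adj x y) ->
  (forall x y, adj x y -> 0 < w x y) ->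
  (forall x, 0 < mu x) ->
  0 < n -> 0 < K ->
  CDE adj w mu n (- K) ->
  (forall x t, 0 <= t -> 0 < u x t) ->
  (forall x t, 0 < t -> derivable (u x) t 1 /\
       derive1 (u x) t = lap adj w mu (fun y => u y t) x) ->
  (forall x, (fun h => h^-1 * (u x h - u x 0)) @ 0^'+
               --> lap adj w mu (fun y => u y 0) x) ->
  forall x t, 0 < t ->
    Gam adj w mu (fun y => Num.sqrt (u y t)) (fun y => Num.sqrt (u y t)) x / u x t
    - derive1 (fun s => Num.sqrt (u x s)) t / Num.sqrt (u x t)
    <= n / (2 * t) + Num.sqrt (n * K * Dmu adj w mu * (Dw adj w + 1) / 2).
Proof.
move=> _ _ _ wp mup n0 K0 cde upos uder _ x t t0.
have me := @main_e R V adj w mu n K u wp mup n0 K0 cde upos uder.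
have dv := @dff R V adj w mu u upos uder t x t0.
have -> : derive1 (fun s => Num.sqrt (u x s)) t = dd R V adj w mu u t x.
  by rewrite derive1E; apply: derive_val.
rewrite (@dd_eq R V adj w mu u upos t x t0).
have fx0 : 0 < ff R V u t x := @ffpos R V u upos t x (ltW t0).
have uE : u x t = Num.sqrt (u x t) ^+ 2 by rewrite sqr_sqrtr // ltW // upos // ltW.
set LHS := (X in X <= _).
have -> : LHS = HH R V adj w mu u t x.
  rewrite /LHS {1}uE /HH /ff; field; move: fx0; rewrite /ff => fx0; by rewrite gt_eqF.
have -> : n * K * Dmu adj w mu * (Dw adj w + 1) / 2 = n * (K * cc R V adj w mu).
  by rewrite /cc; ring.
have -> : n / (2 * t) = (n / 2) / t by field; rewrite gt_eqF.
apply: alg_lim; [by rewrite divr_gt0 | exact: t0 | ].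
move=> e e0 et.
have -> : n / 2 / (t - e) = n / (2 * (t - e)).
  by field; rewrite gt_eqF // subr_gt0.
exact: me.
Qed.
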